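(* Let $\Sigma$ be a finite group and $A$ a pseudofield. The following are equivalent: (1) $A$ is difference closed; (2) for every $n$ and every $E\subseteq A\{y_1,\dots,y_n\}$, if $E$ has a common zero in $B^n$ for some pseudofield $B$ containing $A$, then $E$ has a common zero in $A^n$; (3) for every $n$, every $E\subseteq A\{y_1,\dots,y_n\}$ and every finite $W\subseteq A\{y_1,\dots,y_n\}$, if for some pseudofield $B$ containing $A$ there is a common zero $b\in B^n$ of $E$ with $w(b)\neq0$ for all $w\in W$, then there is a common zero $a\in A^n$ of $E$ with $w(a)\neq0$ for all $w\in W$.
   Context: A difference ring is a commutative ring with identity with an action of the group $\Sigma$ by ring automorphisms. A pseudofield is an absolutely flat difference ring with no $\Sigma$-stable ideals other than $0$ and itself; ''$B$ contains $A$'' means there is an injective difference homomorphism $A\to B$. The difference polynomial ring $A\{y_1,\dots,y_n\}$ is the polynomial ring over $A$ in the indeterminates $\sigma y_i$ ($\sigma\in\Sigma$), with $\Sigma$ acting on coefficients and by $\tau(\sigma y_i)=(\tau\sigma)y_i$; for $b\in B^n$, $f(b)$ is obtained by substituting $\sigma y_i\mapsto\sigma(b_i)$. A pseudofield $A$ is difference closed if for every $n$ and every $\Sigma$-stable ideal $\mathfrak a$ of $A\{y_1,\dots,y_n\}$ the radical of $\mathfrak a$ equals the set of difference polynomials vanishing at every common zero of $\mathfrak a$ in $A^n$. *)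

(* Defs.v *)
From HB Require Import structures.
From mathcomp Require Import all_boot all_order all_fingroup all_algebra.
Set Implicit Arguments. Unset Strict Implicit. Unset Printing Implicit Defensive.
Import GRing.Theory.
Local Open Scope ring_scope.

(* The difference group Sigma is the whole finite group gT. *)

(* An action of Sigma on a commutative ring R by ring automorphisms:
   each act g is a ring endomorphism (type {rmorphism R -> R}), and
   g |-> act g is a group action (hence each act g is an automorphism). *)
Definition is_diff_action (gT : finGroupType) (R : comNzRingType)
  (act : gT -> {rmorphism R -> R}) : Prop :=
  (forall a, act 1%g a = a) /\
  (forall g h a, act (g * h)%g a = act g (act h a)).

Definition ring_ideal (R : comNzRingType) (I : R -> Prop) : Prop :=
  I 0 /\ (forall x y, I x -> I y -> I (x + y)) /\
  (forall r x, I x -> I (r * x)).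

Definition stable_ideal (gT : finGroupType) (R : comNzRingType)
  (act : gT -> {rmorphism R -> R}) (I : R -> Prop) : Prop :=
  ring_ideal I /\ (forall g x, I x -> I (act g x)).

(* Absolutely flat = von Neumann regular (for commutative rings). *)
Definition absolutely_flat (R : comNzRingType) : Prop :=
  forall a : R, exists x : R, a = a * a * x.

Definition pseudofield (gT : finGroupType) (R : comNzRingType)
  (act : gT -> {rmorphism R -> R}) : Prop :=
  absolutely_flat R /\
  (forall I : R -> Prop, stable_ideal act I ->
     (forall x, I x -> x = 0) \/ (forall x, I x)).

(* Indeterminates sigma y_i are indexed by pairs (i, sigma) : 'I_n * gT.
   A monomial is an exponent vector; a difference polynomial is represented
   by a finite formal sum (list) of terms (coefficient, monomial); two lists
   represent the same polynomial iff they have the same coefficients (deq). *)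
Definition monom (n : nat) (gT : finGroupType) := {ffun 'I_n * gT -> nat}.
Definition dpoly (A : Type) (n : nat) (gT : finGroupType) :=
  seq (A * monom n gT).

Definition monom0 n gT : monom n gT := [ffun _ => 0%N].
Definition mmul n gT (m1 m2 : monom n gT) : monom n gT :=
  [ffun v => (m1 v + m2 v)%N].

Definition dcoef (A : nmodType) n gT (p : dpoly A n gT) (m : monom n gT) : A :=
  \sum_(t <- p | t.2 == m) t.1.

Definition deq (A : nmodType) n gT (p q : dpoly A n gT) : Prop :=
  forall m, dcoef p m = dcoef q m.

Definition dzero (A : Type) n gT : dpoly A n gT := [::].
Definition dadd (A : Type) n gT (p q : dpoly A n gT) : dpoly A n gT := p ++ q.
Definition dmul (A : comNzRingType) n gT (p q : dpoly A n gT) : dpoly A n gT :=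
  [seq (t.1 * u.1, mmul t.2 u.2) | t <- p, u <- q].
Definition done_ (A : comNzRingType) n gT : dpoly A n gT := [:: (1, monom0 n gT)].
Definition dexp (A : comNzRingType) n gT (p : dpoly A n gT) (k : nat) :
  dpoly A n gT := iter k (dmul p) (done_ A n gT).

(* Sigma-action on A{y}: on coefficients, and tau(sigma y_i) = (tau sigma) y_i;
   so the exponent of (i, rho) in tau(m) is the exponent of (i, tau^-1 rho) in m. *)
Definition dact (A : comNzRingType) n (gT : finGroupType)
  (actA : gT -> {rmorphism A -> A}) (g : gT) (p : dpoly A n gT) : dpoly A n gT :=
  map (fun t : A * monom n gT =>
         (actA g t.1, [ffun v : 'I_n * gT => t.2 (v.1, (g^-1 * v.2)%g)] : monom n gT)) p.

Definition deval (A : comNzRingType) (B : comNzRingType) n (gT : finGroupType)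
  (phi : A -> B) (actB : gT -> {rmorphism B -> B}) (b : 'I_n -> B)
  (p : dpoly A n gT) : B :=
  \sum_(t <- p) phi t.1 * \prod_(v : 'I_n * gT) (actB v.2 (b v.1)) ^+ (t.2 v).

Definition dpoly_ideal (A : comNzRingType) n gT (I : dpoly A n gT -> Prop) : Prop :=
  I (dzero A n gT) /\
  (forall p q, I p -> I q -> I (dadd p q)) /\
  (forall p q, I q -> I (dmul p q)) /\
  (forall p q, deq p q -> I p -> I q).

Definition dpoly_stable_ideal (A : comNzRingType) n (gT : finGroupType)
  (actA : gT -> {rmorphism A -> A}) (I : dpoly A n gT -> Prop) : Prop :=
  dpoly_ideal I /\ (forall g p, I p -> I (dact actA g p)).

Definition difference_closed (gT : finGroupType) (A : comNzRingType)
  (actA : gT -> {rmorphism A -> A}) : Prop :=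
  forall (n : nat) (I : dpoly A n gT -> Prop), dpoly_stable_ideal actA I ->
  forall f : dpoly A n gT,
    (exists k, I (dexp f k)) <->
    (forall a : 'I_n -> A,
       (forall g, I g -> deval id actA a g = 0) -> deval id actA a f = 0).

Definition contains (gT : finGroupType) (A B : comNzRingType)
  (actA : gT -> {rmorphism A -> A}) (actB : gT -> {rmorphism B -> B})
  (phi : {rmorphism A -> B}) : Prop :=
  injective phi /\ (forall g a, phi (actA g a) = actB g (phi a)).

(* Main.v *)
Require Import Defs.
From HB Require Import structures.
From mathcomp Require Import all_boot all_order all_fingroup all_algebra.
From mathcomp Require Import generic_quotient ring_quotient fraction.
From Stdlib Require Import Classical ClassicalEpsilon FunctionalExtensionality PropExtensionality.
Set Implicit Arguments. Unset Strict Implicit. Unset Printing Implicit Defensive.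
Import GRing.Theory.
Local Open Scope ring_scope.

Local Close Scope quotient_scope.
Lemma cb_ex (P : Prop) : exists b : bool, b = true <-> P.
Proof.
case: (classic P) => h; [exists true | exists false]; split => //.

Qed.
Definition cb (P : Prop) : bool :=
  proj1_sig (constructive_indefinite_description _ (cb_ex P)).

Lemma cbP (P : Prop) : reflect P (cb P).
Proof.
rewrite /cb; case: constructive_indefinite_description => b [h1 h2] /=.
by case: b h1 h2 => h1 h2; constructor; [apply: h1 | move=> /h2].
Qed.

Section DP.
Variables (A : comNzRingType) (n : nat) (gT : finGroupType).
Local Notation M := (monom n gT).
Local Notation P := (dpoly A n gT).

Lemma dcoef_nil (m : M) : dcoef ([::] : P) m = 0.
Proof. by rewrite /dcoef big_nil. Qed.

Lemma dcoef_cons (t : A * M) (p : P) m :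
  dcoef (t :: p) m = (if t.2 == m then t.1 else 0) + dcoef p m.
Proof. by rewrite /dcoef big_cons; case: ifP; rewrite ?add0r. Qed.

Lemma dcoef_cat (p q : P) m : dcoef (p ++ q) m = dcoef p m + dcoef q m.
Proof. by rewrite /dcoef big_cat. Qed.

Lemma dcoefE (p : P) m :
  dcoef p m = \sum_(t <- p) (if t.2 == m then t.1 else 0).
Proof. by rewrite /dcoef big_mkcond. Qed.

Lemma regroup (V : nmodType) (F : A -> M -> V)
  (F0 : forall m, F 0 m = 0) (FD : forall x y m, F (x + y) m = F x m + F y m)
  (p : P) (s : seq M) : uniq s -> {subset map snd p <= s} ->
  \sum_(t <- p) F t.1 t.2 = \sum_(m <- s) F (dcoef p m) m.
Proof.
move=> us; elim: p => [|t p IH] sub.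
  rewrite big_nil big1_seq //= => m _; by rewrite dcoef_nil F0.
rewrite big_cons IH; last by move=> x hx; apply: sub; rewrite inE hx orbT.
under [RHS]eq_bigr => m _ do rewrite dcoef_cons FD.
rewrite big_split /=; congr (_ + _).
have ht : t.2 \in s by apply: sub; rewrite inE eqxx.
rewrite (bigD1_seq t.2) //= eqxx big1 ?addr0 // => m.
by rewrite eq_sym => /negbTE ->; apply: F0.
Qed.

Lemma deq_sum (V : nmodType) (F : A -> M -> V)
  (F0 : forall m, F 0 m = 0) (FD : forall x y m, F (x + y) m = F x m + F y m)
  (p q : P) : deq p q ->
  \sum_(t <- p) F t.1 t.2 = \sum_(t <- q) F t.1 t.2.
Proof.
move=> h; set s := undup (map snd (p ++ q)).
have us : uniq s by apply: undup_uniq.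
rewrite (@regroup _ F F0 FD p s us) ?(@regroup _ F F0 FD q s us).
- by apply: eq_bigr => m _; rewrite h.
- by move=> x hx; rewrite mem_undup map_cat mem_cat hx orbT.
- by move=> x hx; rewrite mem_undup map_cat mem_cat hx.
Qed.

Definition mmulC (m1 m2 : M) : mmul m1 m2 = mmul m2 m1.
Proof. by apply/ffunP => v; rewrite !ffunE addnC. Qed.
Lemma mmulA (m1 m2 m3 : M) : mmul (mmul m1 m2) m3 = mmul m1 (mmul m2 m3).
Proof. by apply/ffunP => v; rewrite !ffunE addnA. Qed.
Lemma mmul0 (m : M) : mmul (monom0 n gT) m = m.
Proof. by apply/ffunP => v; rewrite !ffunE. Qed.

Lemma dcoef_mul (p q : P) m : dcoef (dmul p q) m =
  \sum_(t <- p) \sum_(u <- q) (if mmul t.2 u.2 == m then t.1 * u.1 else 0).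
Proof. by rewrite dcoefE /dmul big_allpairs_dep. Qed.

Definition dneg (p : P) : P := [seq (- t.1, t.2) | t <- p].

Lemma dcoef_neg (p : P) m : dcoef (dneg p) m = - dcoef p m.
Proof. by rewrite !dcoefE big_map -sumrN; apply: eq_bigr => t _ /=; case: ifP; rewrite ?oppr0. Qed.

Lemma deq_refl (p : P) : deq p p. Proof. by []. Qed.
Lemma deq_sym (p q : P) : deq p q -> deq q p. Proof. by move=> h m. Qed.
Lemma deq_trans (p q r : P) : deq p q -> deq q r -> deq p r.
Proof. by move=> h1 h2 m; rewrite h1 h2. Qed.

Lemma deq_cat (p p' q q' : P) : deq p p' -> deq q q' -> deq (p ++ q) (p' ++ q').
Proof. by move=> h1 h2 m; rewrite !dcoef_cat h1 h2. Qed.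

Lemma deq_neg (p p' : P) : deq p p' -> deq (dneg p) (dneg p').
Proof. by move=> h m; rewrite !dcoef_neg h. Qed.

Lemma dmulC (p q : P) : deq (dmul p q) (dmul q p).
Proof.
move=> m; rewrite !dcoef_mul exchange_big; apply: eq_bigr => u _; apply: eq_bigr => t _.
by rewrite mmulC mulrC.
Qed.

Lemma deq_mull (p p' q : P) : deq p p' -> deq (dmul p q) (dmul p' q).
Proof.
move=> h m; rewrite !dcoef_mul.
pose F (c : A) (m' : M) := \sum_(u <- q) (if mmul m' u.2 == m then c * u.1 else 0).
apply: (@deq_sum _ F) => //.
- by move=> m'; rewrite /F big1 // => u _; case: ifP; rewrite ?mul0r.
- move=> x y m'; rewrite /F -big_split; apply: eq_bigr => u _ /=.
  by case: ifP; rewrite ?addr0 ?mulrDl.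
Qed.

Lemma deq_mul (p p' q q' : P) : deq p p' -> deq q q' -> deq (dmul p q) (dmul p' q').
Proof.
move=> h1 h2; apply: deq_trans (deq_mull q h1) _.
apply: deq_trans (dmulC _ _) _; apply: deq_trans (deq_mull _ h2) _; exact: dmulC.
Qed.

Lemma dmulA (p q r : P) : deq (dmul (dmul p q) r) (dmul p (dmul q r)).
Proof.
move=> m; rewrite !dcoef_mul.
rewrite [in LHS]/dmul big_allpairs_dep /=.
apply: eq_bigr => t _; rewrite [in RHS]/dmul big_allpairs_dep /=.
apply: eq_bigr => u _; apply: eq_bigr => w _.
by rewrite mmulA mulrA.
Qed.

Lemma dmul1 (p : P) : deq (dmul (done_ A n gT) p) p.
Proof.
move=> m; rewrite dcoef_mul big_cons big_nil addr0 dcoefE /=.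
by apply: eq_bigr => u _; rewrite mmul0 mul1r.
Qed.

Lemma dmulDl (p q r : P) : deq (dmul (dadd p q) r) (dadd (dmul p r) (dmul q r)).
Proof. by move=> m; rewrite dcoef_cat !dcoef_mul big_cat. Qed.

Lemma daddC (p q : P) : deq (dadd p q) (dadd q p).
Proof. by move=> m; rewrite !dcoef_cat addrC. Qed.

Lemma daddN (p : P) : deq (dadd (dneg p) p) (dzero A n gT).
Proof. by move=> m; rewrite dcoef_cat dcoef_neg addNr dcoef_nil. Qed.

Lemma done_neq0 : ~ deq (done_ A n gT) (dzero A n gT).
Proof.
move=> /(_ (monom0 n gT)); rewrite dcoef_nil dcoef_cons dcoef_nil eqxx addr0.
by move/eqP; rewrite oner_eq0.
Qed.

End DP.

Local Open Scope quotient_scope.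
Definition deqb (A : comNzRingType) n (gT : finGroupType) : rel (dpoly A n gT) :=
  fun p q => cb (deq p q).

Lemma deqb_equiv (A : comNzRingType) n (gT : finGroupType) : equiv_class_of (@deqb A n gT).
Proof.
split=> [x|x y|x y z]; rewrite /deqb.
- by apply/cbP.
- by apply/cbP/cbP; apply: deq_sym.
- by move=> /cbP h1 /cbP h2; apply/cbP; apply: deq_trans h1 h2.
Qed.

Canonical deqb_equivrel (A : comNzRingType) n (gT : finGroupType) := EquivRelPack (@deqb_equiv A n gT).
Canonical deqb_encModRel (A : comNzRingType) n (gT : finGroupType) := defaultEncModRel (@deqb A n gT).

Definition RQ (A : comNzRingType) n (gT : finGroupType) := {eq_quot (@deqb A n gT)}.
HB.instance Definition _ (A : comNzRingType) n (gT : finGroupType) :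
  EqQuotient (dpoly A n gT) (@deqb A n gT) (RQ A n gT) := EqQuotient.on (RQ A n gT).
HB.instance Definition _ (A : comNzRingType) n (gT : finGroupType) := Choice.on (RQ A n gT).

Section RQ.
Variables (A : comNzRingType) (n : nat) (gT : finGroupType).
Local Notation P := (dpoly A n gT).
Local Notation R := (RQ A n gT).

Lemma piRP (p q : P) : \pi_R p = \pi_R q <-> deq p q.
Proof. by split=> [/eqquotP/cbP | h]; last apply/eqquotP/cbP. Qed.

Lemma repr_deq (p : P) : deq (repr (\pi_R p)) p.
Proof. by apply/piRP; rewrite reprK. Qed.

Definition rzero : R := \pi_R (dzero A n gT).
Definition rone : R := \pi_R (done_ A n gT).
Definition radd := locked (fun x y : R => \pi_R (dadd (repr x) (repr y)) : R).
Definition ropp := locked (fun x : R => \pi_R (dneg (repr x)) : R).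
Definition rmul := locked (fun x y : R => \pi_R (dmul (repr x) (repr y)) : R).

Lemma pi_radd (p q : P) : \pi_R (dadd p q) = radd (\pi_R p) (\pi_R q).
Proof. by rewrite /radd -lock; apply/piRP; apply: deq_cat; apply: deq_sym; apply: repr_deq. Qed.
Lemma pi_ropp (p : P) : \pi_R (dneg p) = ropp (\pi_R p).
Proof. by rewrite /ropp -lock; apply/piRP; apply: deq_neg; apply: deq_sym; apply: repr_deq. Qed.
Lemma pi_rmul (p q : P) : \pi_R (dmul p q) = rmul (\pi_R p) (\pi_R q).
Proof. by rewrite /rmul -lock; apply/piRP; apply: deq_mul; apply: deq_sym; apply: repr_deq. Qed.

Lemma raddA : associative radd.
Proof. by elim/quotW=> x; elim/quotW=> y; elim/quotW=> z; rewrite -!pi_radd /dadd catA. Qed.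
Lemma raddC : commutative radd.
Proof. by elim/quotW=> x; elim/quotW=> y; rewrite -!pi_radd; apply/piRP/daddC. Qed.
Lemma radd0 : left_id rzero radd.
Proof. by elim/quotW=> x; rewrite /rzero -pi_radd. Qed.
Lemma raddN : left_inverse rzero ropp radd.
Proof. by elim/quotW=> x; rewrite -pi_ropp -pi_radd /rzero; apply/piRP/daddN. Qed.

HB.instance Definition _ := GRing.isZmodule.Build R raddA raddC radd0 raddN.

Lemma rmulA : associative rmul.
Proof. by elim/quotW=> x; elim/quotW=> y; elim/quotW=> z; rewrite -!pi_rmul; apply/piRP; apply: deq_sym; apply: dmulA. Qed.
Lemma rmulC : commutative rmul.
Proof. by elim/quotW=> x; elim/quotW=> y; rewrite -!pi_rmul; apply/piRP/dmulC. Qed.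
Lemma rmul1 : left_id rone rmul.
Proof. by elim/quotW=> x; rewrite /rone -pi_rmul; apply/piRP/dmul1. Qed.
Lemma rmulDl : left_distributive rmul radd.
Proof.
by elim/quotW=> x; elim/quotW=> y; elim/quotW=> z; rewrite -!pi_radd -!pi_rmul -pi_radd; apply/piRP/dmulDl.
Qed.
Lemma rone_neq0 : rone != rzero.
Proof. by apply/eqP => /piRP; apply: done_neq0. Qed.

HB.instance Definition _ := GRing.Zmodule_isComNzRing.Build R rmulA rmulC rmul1 rmulDl rone_neq0.

End RQ.


Local Close Scope quotient_scope.
Section Eval.
Variables (A B : comNzRingType) (n : nat) (gT : finGroupType).
Variables (phi : {rmorphism A -> B}) (x : 'I_n * gT -> B).
Local Notation P := (dpoly A n gT).

Definition mev (m : monom n gT) : B := \prod_(v : 'I_n * gT) x v ^+ m v.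
Definition peval (p : P) : B := \sum_(t <- p) phi t.1 * mev t.2.

Lemma mev_mul m1 m2 : mev (mmul m1 m2) = mev m1 * mev m2.
Proof. by rewrite /mev -big_split; apply: eq_bigr => v _; rewrite ffunE exprD. Qed.

Lemma mev0 : mev (monom0 n gT) = 1.
Proof. by rewrite /mev big1 // => v _; rewrite ffunE expr0. Qed.

Lemma peval_cat (p q : P) : peval (dadd p q) = peval p + peval q.
Proof. by rewrite /peval /dadd big_cat. Qed.

Lemma peval_nil : peval (dzero A n gT) = 0.
Proof. by rewrite /peval big_nil. Qed.

Lemma peval_mul (p q : P) : peval (dmul p q) = peval p * peval q.
Proof.
rewrite /peval /dmul big_allpairs_dep big_distrl; apply: eq_bigr => t _ /=.
rewrite big_distrr; apply: eq_bigr => u _ /=.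
by rewrite rmorphM mev_mul mulrACA.
Qed.

Lemma peval_one : peval (done_ A n gT) = 1.
Proof. by rewrite /peval big_cons big_nil /= rmorph1 mev0 mulr1 addr0. Qed.

Lemma peval_exp (p : P) k : peval (dexp p k) = peval p ^+ k.
Proof.
elim: k => [|k IH]; first by rewrite expr0 /dexp /= peval_one.
by rewrite exprS -IH /dexp iterS peval_mul.
Qed.

Lemma peval_neg (p : P) : peval (dneg p) = - peval p.
Proof. by rewrite /peval big_map -sumrN; apply: eq_bigr => t _ /=; rewrite rmorphN mulNr. Qed.

Lemma peval_deq (p q : P) : deq p q -> peval p = peval q.
Proof.
move=> h; rewrite /peval.
apply: (@deq_sum A n gT B (fun c m => phi c * mev m)) => //.
- by move=> m; rewrite rmorph0 mul0r.
- by move=> c d m; rewrite rmorphD mulrDl.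
Qed.

End Eval.

Lemma devalE (A B : comNzRingType) n (gT : finGroupType) (phi : {rmorphism A -> B})
  (actB : gT -> {rmorphism B -> B}) (b : 'I_n -> B) (p : dpoly A n gT) :
  deval phi actB b p = peval phi (fun v => actB v.2 (b v.1)) p.
Proof. by []. Qed.

Lemma deval_dact (A B : comNzRingType) n (gT : finGroupType)
  (actA : gT -> {rmorphism A -> A}) (actB : gT -> {rmorphism B -> B})
  (phi : {rmorphism A -> B}) (b : 'I_n -> B) (g : gT) (p : dpoly A n gT) :
  is_diff_action actB -> (forall g a, phi (actA g a) = actB g (phi a)) ->
  deval phi actB b (dact actA g p) = actB g (deval phi actB b p).
Proof.
move=> [_ hB] hphi; rewrite /deval /dact big_map rmorph_sum; apply: eq_bigr => t _ /=.
rewrite rmorphM hphi; congr (_ * _).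
rewrite rmorph_prod (reindex_inj (h := fun v : 'I_n * gT => (v.1, (g * v.2)%g))).
  apply: eq_bigr => v _ /=; rewrite ffunE /= mulKg rmorphXn hB.
  by case: v.
by move=> [i s] [j r] /= [-> /mulgI ->].
Qed.

Local Close Scope quotient_scope.
Definition psub (X : Type) (U V : X -> Prop) := forall x, U x -> V x.
Definition pchain (X : Type) (D : (X -> Prop) -> Prop) := forall U V, D U -> D V -> psub U V \/ psub V U.
Definition psup (X : Type) (base : X -> Prop) (D : (X -> Prop) -> Prop) : X -> Prop :=
  fun x => base x \/ exists U, D U /\ U x.
Inductive tower (X : Type) (base : X -> Prop) (g : (X -> Prop) -> (X -> Prop)) : (X -> Prop) -> Prop :=
| tw_g M : tower base g M -> tower base g (g M)
| tw_sup D : (forall U, D U -> tower base g U) -> pchain D -> tower base g (psup base D).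

Section Zorn.
Variable X : Type.
Variable S : (X -> Prop) -> Prop.
Variable base : X -> Prop.
Hypothesis Sbase : S base.
Hypothesis Ssup : forall D, (forall U, D U -> S U) -> pchain D -> S (psup base D).

Lemma pext (U V : X -> Prop) : psub U V -> psub V U -> U = V.
Proof.
move=> h1 h2; apply: functional_extensionality => x.
by apply: propositional_extensionality; split; [apply: h1 | apply: h2].
Qed.

Lemma zorn : exists M, S M /\ psub base M /\ forall U, S U -> psub M U -> psub U M.
Proof.
apply: NNPP => H.
have H' : forall M, S M -> psub base M -> exists U, S U /\ psub M U /\ ~ psub U M.
  move=> M SM bM; apply: NNPP => nE; apply: H; exists M; split=> //; split=> // U SU MU.
  by apply: NNPP => nUM; apply: nE; exists U.
pose g (M : X -> Prop) := epsilon (inhabits M)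
  (fun U => S M /\ psub base M -> S U /\ psub M U /\ ~ psub U M).
have gP : forall M, S M -> psub base M -> S (g M) /\ psub M (g M) /\ ~ psub (g M) M.
  move=> M SM bM; have := @epsilon_spec _ (inhabits M)
    (fun U => S M /\ psub base M -> S U /\ psub M U /\ ~ psub U M).
  case.
    by have [U [? [? ?]]] := H' M SM bM; exists U.
  by [].
  by [].
pose Tw := tower base g.
have Tg : forall M, Tw M -> Tw (g M) by move=> M TM; apply: tw_g.
have Tsup : forall D, (forall U, D U -> Tw U) -> pchain D -> Tw (psup base D).
  by move=> D hD cD; apply: tw_sup.
have Tind : forall Q : (X -> Prop) -> Prop,
     (forall M, Tw M -> Q M -> Q (g M)) ->
     (forall D, (forall U, D U -> Tw U) -> (forall U, D U -> Q U) -> pchain D -> Q (psup base D)) ->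
     forall M, Tw M -> Q M.
  move=> Q hg hs M TM; elim: TM => [M0 TM0 QM0 | D hT hQ cD]; first by apply: hg.
  by apply: hs.
have T1 : forall M, Tw M -> S M /\ psub base M.
  apply: Tind.
  - move=> M _ [SM bM]; have [? [? ?]] := gP M SM bM; split=> // x /bM; auto.
  - move=> D _ hD cD; split; first by apply: Ssup => // U /hD [].
    by move=> x bx; left.
have T2 : forall M, Tw M -> psub M (g M) /\ ~ psub (g M) M.
  by move=> M /T1 [SM bM]; have [? [? ?]] := gP M SM bM.
have subT : forall U V W : X -> Prop, psub U V -> psub V W -> psub U W.
  move=> U V W h1 h2 x hx; exact: h2 _ (h1 _ hx).
have lemA : forall c, Tw c ->
    (forall x, Tw x -> psub x c -> ~ psub c x -> psub (g x) c) ->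
    forall x, Tw x -> psub x c \/ psub (g c) x.
  move=> c Tc ext; apply: Tind.
  - move=> x Tx [xc | gcx].
    + case: (classic (psub c x)) => cx.
        by right; rewrite (pext xc cx).
      by left; apply: ext.
    + by right; apply: subT gcx (T2 x Tx).1.
  - move=> D hT hD cD.
    case: (classic (exists U, D U /\ psub (g c) U)) => [[U [DU gU]] | nE].
      by right => z /gU zU; right; exists U.
    left => z [bz | [U [DU Uz]]]; first by apply: (T1 c Tc).2.
    case: (hD U DU) => [Uc | gU]; first by apply: Uc.
    by exfalso; apply: nE; exists U.
have lemB : forall c, Tw c ->
    (forall x, Tw x -> psub x c -> ~ psub c x -> psub (g x) c).
  apply: Tind.
  - move=> c Tc ext x Tx xgc ngcx.
    case: (lemA c Tc ext x Tx) => [xc | gcx]; last by exfalso; apply: ngcx.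
    case: (classic (psub c x)) => cx.
      by rewrite (pext xc cx) => z.
    by apply: subT (ext x Tx xc cx) (T2 c Tc).1.
  - move=> D hT hD cD x Tx xs nsx.
    have [U [DU nUx]] : exists U, D U /\ ~ psub U x.
      apply: NNPP => nE; apply: nsx => z [bz | [U [DU Uz]]].
        by apply: (T1 x Tx).2.
      by apply: NNPP => nxz; apply: nE; exists U; split=> // h; apply: nxz; apply: h.
    case: (lemA U (hT U DU) (hD U DU) x Tx) => [xU | gUx].
      by move=> z /(hD U DU x Tx xU nUx) Uz; right; exists U.
    by exfalso; apply: nUx; apply: subT (T2 U (hT U DU)).1 gUx.
have chT : pchain Tw.
  move=> U V TU TV; case: (lemA V TV (lemB V TV) U TU) => [UV | gVU]; first by left.
  by right; apply: subT (T2 V TV).1 gVU.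
have Tm : Tw (psup base Tw) by apply: Tsup.
have := (T2 _ Tm).2; apply => z gz; right; exists (g (psup base Tw)); split=> //.
exact: Tg.
Qed.
End Zorn.

Lemma exists_prime (R : comNzRingType) (J : R -> Prop) (F : R) :
  ring_ideal J -> (forall k, ~ J (F ^+ k)) ->
  exists Pr : R -> Prop, [/\ ring_ideal Pr, (forall x, J x -> Pr x),
    (forall k, ~ Pr (F ^+ k)) & (forall x y, Pr (x * y) -> Pr x \/ Pr y)].
Proof.
move=> [J0 [JD JM]] JF.
pose S (U : R -> Prop) := [/\ ring_ideal U, (forall k, ~ U (F ^+ k)) & psub J U].
have Sbase : S J by split=> //; split.
have Ssup : forall D, (forall U, D U -> S U) -> pchain D -> S (psup J D).
  move=> D hD cD; split.
  - split; first by left.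
    split.
    + move=> x y [Jx | [U [DU Ux]]] [Jy | [V [DV Vy]]].
      * by left; apply: JD.
      * have [[_ [UD _]] _ JV] := hD V DV; right; exists V; split=> //; apply: UD => //; exact: JV.
      * have [[_ [UD _]] _ JU] := hD U DU; right; exists U; split=> //; apply: UD => //; exact: JU.
      * case: (cD U V DU DV) => [UV | VU].
          have [[_ [VD _]] _ _] := hD V DV; right; exists V; split=> //; apply: VD => //; exact: UV.
        have [[_ [UD _]] _ _] := hD U DU; right; exists U; split=> //; apply: UD => //; exact: VU.
    + move=> r x [Jx | [U [DU Ux]]]; first by left; apply: JM.
      have [[_ [_ UM]] _ _] := hD U DU; right; exists U; split=> //; exact: UM.
  - move=> k [Jk | [U [DU Uk]]]; first by apply: (JF k).
    by have [_ UF _] := hD U DU; apply: (UF k).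
  - by move=> x Jx; left.
have [M [[[M0 [MD MM]] MF JM'] [_ Mmax]]] := zorn Ssup.
exists M; split=> //.
move=> x y Mxy; apply: NNPP => nM.
have nMx : ~ M x by move=> h; apply: nM; left.
have nMy : ~ M y by move=> h; apply: nM; right.
pose Mz (z : R) := fun w => exists m r, M m /\ w = m + r * z.
have Mz_pow : forall z, ~ M z -> exists k m r, M m /\ F ^+ k = m + r * z.
  move=> z nMz; apply: NNPP => nE.
  have SMz : S (Mz z).
    split.
    - split; first by exists 0, 0; rewrite mul0r addr0.
      split.
      + move=> a b [m1 [r1 [Mm1 ->]]] [m2 [r2 [Mm2 ->]]].
        exists (m1 + m2), (r1 + r2); split; first by apply: MD.
        by rewrite mulrDl addrACA.
      + move=> r a [m1 [r1 [Mm1 ->]]]; exists (r * m1), (r * r1); split; first by apply: MM.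
        by rewrite mulrDr mulrA.
    - by move=> k [m [r [Mm hk]]]; apply: nE; exists k, m, r.
    - by move=> w Jw; exists w, 0; split; [apply: JM' | rewrite mul0r addr0].
  have : psub (Mz z) M.
    apply: Mmax => // w Mw; exists w, 0; split=> //; by rewrite mul0r addr0.
  by move=> /(_ z) h; apply: nMz; apply: h; exists 0, 1; rewrite mul1r add0r.
have [k [m1 [r1 [Mm1 e1]]]] := Mz_pow x nMx.
have [l [m2 [r2 [Mm2 e2]]]] := Mz_pow y nMy.
suff : M (F ^+ (k + l)) by apply: MF.
rewrite exprD e1 e2.
rewrite mulrDl !mulrDr.
apply MD; first by apply MD; [apply MM | rewrite mulrC; apply MM].
apply MD; first by apply MM.
by rewrite mulrACA; apply MM.
Qed.

Local Open Scope quotient_scope.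
Section PrimeField.
Variables (R : comNzRingType) (Pr : R -> Prop).
Hypothesis hPr : ring_ideal Pr.
Hypothesis hP1 : ~ Pr 1.
Hypothesis hPp : forall x y, Pr (x * y) -> Pr x \/ Pr y.

Definition Pb : R -> bool := fun r => cb (Pr r).

Lemma Pb_closed : idealr_closed Pb.
Proof.
case: hPr => [P0 [PD PM]]; split.
- by apply/cbP.
- by apply/cbP.
- by move=> a u v /cbP hu /cbP hv; apply/cbP; apply: PD => //; apply: PM.
Qed.

HB.instance Definition _ := isIdealr.Build R Pb Pb_closed.

Lemma Pb_prime : prime_idealr_closed Pb.
Proof. by move=> u v /cbP /hPp [h | h]; apply/orP; [left | right]; apply/cbP. Qed.

HB.instance Definition _ := isPrimeIdealrClosed.Build R Pb Pb_prime.

Local Notation DQ := {ideal_quot (Pb : idealr R)}.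

Definition dunit : {pred DQ} := fun x => cb (exists y, y * x = 1).
Definition dinv (x : DQ) : DQ :=
  if dunit x then epsilon (inhabits x) (fun y => (exists y, y * x = 1) -> y * x = 1) else x.

Lemma dmulVx : {in dunit, left_inverse 1 dinv *%R}.
Proof.
move=> x hx; rewrite /dinv (_ : dunit x = true) //; move/cbP: hx => hx.
by apply: (@epsilon_spec _ _ (fun y => (exists y, y * x = 1) -> y * x = 1)) => //; case: hx => y hy; exists y.
Qed.
Lemma dunitPl : forall x y : DQ, y * x = 1 -> dunit x.
Proof. by move=> x y h; apply/cbP; exists y. Qed.
Lemma dinv_out : {in [predC dunit], dinv =1 id}.
Proof. by move=> x; rewrite inE /dinv => /negbTE h; rewrite (_ : dunit x = false) //. Qed.

HB.instance Definition _ := GRing.ComNzRing_hasMulInverse.Build DQ dmulVx dunitPl dinv_out.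

Lemma dq_integral : GRing.integral_domain_axiom DQ.
Proof. by move=> x y; apply: Quotient.rquot_IdomainAxiom. Qed.

HB.instance Definition _ := GRing.ComUnitRing_isIntegral.Build DQ dq_integral.

Definition KF : fieldType := {fraction DQ}.

Definition rho : {rmorphism R -> KF} := (@tofrac DQ \o \pi_DQ)%FUN.

Lemma rhoP r : rho r = 0 <-> Pr r.
Proof.
have e : (r \in (Pb : idealr R)) = (\pi_DQ r == 0).
  by rewrite -[r]subr0 Quotient.idealrBE subr0 -(rmorph0 (\pi_DQ : {rmorphism R -> DQ})).
rewrite /rho /=; split.
- by move/eqP; rewrite tofrac_eq0 -e => /cbP.
- by move=> h; apply/eqP; rewrite tofrac_eq0 -e; apply/cbP.
Qed.
End PrimeField.

Lemma prime_field (R : comNzRingType) (Pr : R -> Prop) :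
  ring_ideal Pr -> ~ Pr 1 -> (forall x y, Pr (x * y) -> Pr x \/ Pr y) ->
  exists (K : fieldType) (rho : {rmorphism R -> K}), forall r, rho r = 0 <-> Pr r.
Proof. by move=> h1 h2 h3; exists (KF h1 h2 h3), (rho h1 h2 h3); apply: rhoP. Qed.

Local Close Scope quotient_scope.
Definition BK (gT : finGroupType) (K : comNzRingType) := {ffun gT -> K}.
HB.instance Definition _ (gT : finGroupType) (K : comNzRingType) := GRing.PzRing.on (BK gT K).
HB.instance Definition _ (gT : finGroupType) (K : comNzRingType) :=
  GRing.PzSemiRing_isNonZero.Build (BK gT K) (@ffun1_nonzero gT K 1%g).
HB.instance Definition _ (gT : finGroupType) (K : comNzRingType) :=
  GRing.PzRing_hasCommutativeMul.Build (BK gT K) (@ffun_mulC gT K).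


Section BKlemmas.
Variables (gT : finGroupType) (K : comNzRingType).
Local Notation B := (BK gT K).

Lemma bkE (x : gT -> K) (s : gT) : ([ffun s => x s] : B) s = x s.
Proof. by rewrite ffunE. Qed.
Lemma bk_add (x y : B) s : (x + y) s = x s + y s. Proof. by rewrite ffunE. Qed.
Lemma bk_mul (x y : B) s : (x * y) s = x s * y s. Proof. by rewrite ffunE. Qed.
Lemma bk_opp (x : B) s : (- x) s = - x s. Proof. by rewrite ffunE. Qed.
Lemma bk_one s : (1 : B) s = 1. Proof. by rewrite ffunE. Qed.
Lemma bk_zero s : (0 : B) s = 0. Proof. by rewrite ffunE. Qed.
Lemma bk_sum (I : Type) (r : seq I) (F : I -> B) s :
  (\sum_(i <- r) F i) s = \sum_(i <- r) F i s.
Proof. by elim: r => [|i r IH]; rewrite ?big_nil ?big_cons ?bk_zero ?bk_add ?IH. Qed.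
Lemma bk_prod (I : Type) (r : seq I) (F : I -> B) s :
  (\prod_(i <- r) F i) s = \prod_(i <- r) F i s.
Proof. by elim: r => [|i r IH]; rewrite ?big_nil ?big_cons ?bk_one ?bk_mul ?IH. Qed.
Lemma bk_exp (x : B) k s : (x ^+ k) s = x s ^+ k.
Proof. by elim: k => [|k IH]; rewrite ?expr0 ?bk_one // !exprS bk_mul IH. Qed.

Definition shiftB (t : gT) (h : B) : B := [ffun s => h (s * t)%g].

Lemma shiftB_zmod t : zmod_morphism (shiftB t).
Proof. by move=> x y; apply/ffunP => s; rewrite !ffunE. Qed.
Lemma shiftB_monoid t : monoid_morphism (shiftB t).
Proof. by split; [apply/ffunP => s; rewrite !ffunE | move=> x y; apply/ffunP => s; rewrite !ffunE]. Qed.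
End BKlemmas.

HB.instance Definition _ (gT : finGroupType) (K : comNzRingType) (t : gT) :=
  GRing.isZmodMorphism.Build (BK gT K) (BK gT K) (shiftB t) (@shiftB_zmod gT K t).
HB.instance Definition _ (gT : finGroupType) (K : comNzRingType) (t : gT) :=
  GRing.isMonoidMorphism.Build (BK gT K) (BK gT K) (shiftB t) (@shiftB_monoid gT K t).

Definition actBK (gT : finGroupType) (K : comNzRingType) (t : gT) : {rmorphism BK gT K -> BK gT K} :=
  shiftB t.

Lemma actBK_action (gT : finGroupType) (K : comNzRingType) : is_diff_action (@actBK gT K).
Proof.
split.
- by move=> a; apply/ffunP => s; rewrite /actBK /= ffunE mulg1.
- by move=> g h a; apply/ffunP => s; rewrite /actBK /= !ffunE mulgA.
Qed.

Lemma actBK_pseudofield (gT : finGroupType) (K : fieldType) : pseudofield (@actBK gT K).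
Proof.
split.
- move=> a; exists [ffun s => (a s)^-1]; apply/ffunP => s; rewrite !ffunE.
  case: (eqVneq (a s) 0) => [-> | nz]; first by rewrite !mul0r.
  by rewrite -mulrA mulfV // mulr1.
- move=> I [[I0 [ID IM]] Ist].
  case: (classic (exists x, I x /\ x != 0)) => [[x [Ix nx]] | nE]; last first.
    by left => x Ix; apply: NNPP => nx; apply: nE; exists x; split=> //; apply/eqP.
  right.
  have [s0 hs0] : exists s0, x s0 != 0.
    apply: NNPP => nE; move/eqP: nx; apply; apply/ffunP => s; rewrite ffunE.
    by apply: NNPP => h; apply: nE; exists s; apply/eqP.
  pose d (s1 : gT) : BK gT K := [ffun s => (s == s1)%:R].
  have d0 : I (d s0).
    have -> : d s0 = [ffun s => (s == s0)%:R * (x s0)^-1] * x.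
      apply/ffunP => s; rewrite !ffunE; case: eqP => [-> | _]; last by rewrite !mul0r.
      by rewrite mul1r mulVf.
    by apply: IM.
  have dall : forall s1, I (d s1).
    move=> s1; have -> : d s1 = actBK K (s1^-1 * s0)%g (d s0).
      apply/ffunP => s; rewrite /actBK /= !ffunE mulgA -{2}[s0]mul1g (inj_eq (mulIg s0)).
      by rewrite -eq_mulgV1.
    by apply: Ist.
  have one : I 1.
    have -> : (1 : BK gT K) = \sum_(s1 : gT) d s1.
      apply/ffunP => s; rewrite bk_sum ffunE (bigD1 s) //= ffunE eqxx big1 ?addr0 //.
      by move=> s1 /negbTE ns; rewrite ffunE eq_sym ns.
    by apply: big_ind => //; apply: ID.
  by move=> y; rewrite -[y]mulr1; apply: IM.
Qed.

Local Open Scope quotient_scope.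
Lemma peval_comp (A B C : comNzRingType) n (gT : finGroupType) (rho : {rmorphism B -> C})
  (phi : {rmorphism A -> B}) (x : 'I_n * gT -> B) (q : dpoly A n gT) :
  rho (peval phi x q) = peval (rho \o phi)%FUN (rho \o x)%FUN q.
Proof.
rewrite /peval rmorph_sum; apply: eq_bigr => t _.
by rewrite rmorphM /mev rmorph_prod /=; congr (_ * _); apply: eq_bigr => v _; rewrite rmorphXn.
Qed.

Definition mono n (gT : finGroupType) (v : 'I_n * gT) : monom n gT := [ffun w => (w == v : nat)].
Definition Cc (A : comNzRingType) n (gT : finGroupType) (a : A) : RQ A n gT :=
  \pi_(RQ A n gT) [:: (a, monom0 n gT)].
Definition Yv (A : comNzRingType) n (gT : finGroupType) (v : 'I_n * gT) : RQ A n gT :=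
  \pi_(RQ A n gT) [:: (1, mono v)].

Section Pi.
Variables (A : comNzRingType) (n : nat) (gT : finGroupType).
Local Notation R := (RQ A n gT).
Local Notation P := (dpoly A n gT).

Lemma pi_add (p q : P) : \pi_R (dadd p q) = \pi_R p + \pi_R q.
Proof. exact: pi_radd. Qed.
Lemma pi_mul (p q : P) : \pi_R (dmul p q) = \pi_R p * \pi_R q.
Proof. exact: pi_rmul. Qed.
Lemma pi_neg (p : P) : \pi_R (dneg p) = - \pi_R p.
Proof. exact: pi_ropp. Qed.
Lemma pi_one : \pi_R (done_ A n gT) = 1.
Proof. by []. Qed.
Lemma pi_exp (p : P) k : \pi_R (dexp p k) = \pi_R p ^+ k.
Proof.
elim: k => [|k IH]; first by rewrite expr0.
by rewrite exprS -IH /dexp iterS pi_mul.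
Qed.

Lemma Cc_zmod : zmod_morphism (@Cc A n gT).
Proof.
move=> a b; rewrite /Cc -pi_neg -pi_add; apply/piRP => m.
rewrite /dadd /= !dcoef_cons !dcoef_nil /=.
by case: ifP; rewrite ?addr0 ?oppr0.
Qed.
Lemma Cc_monoid : monoid_morphism (@Cc A n gT).
Proof. by split=> // a b; rewrite /Cc -pi_mul /dmul /= mmul0. Qed.
End Pi.

HB.instance Definition _ (A : comNzRingType) n (gT : finGroupType) :=
  GRing.isZmodMorphism.Build A (RQ A n gT) (@Cc A n gT) (@Cc_zmod A n gT).
HB.instance Definition _ (A : comNzRingType) n (gT : finGroupType) :=
  GRing.isMonoidMorphism.Build A (RQ A n gT) (@Cc A n gT) (@Cc_monoid A n gT).

Section Pi2.
Variables (A : comNzRingType) (n : nat) (gT : finGroupType).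
Local Notation R := (RQ A n gT).
Local Notation P := (dpoly A n gT).
Local Notation M := (monom n gT).

Definition mpow (v : 'I_n * gT) (k : nat) : M := [ffun w => ((w == v) * k)%N].

Lemma Yv_exp v k : Yv A v ^+ k = \pi_R [:: (1, mpow v k)].
Proof.
elim: k => [|k IH].
  rewrite expr0 -pi_one; congr (\pi_R [:: (_, _)]); apply/ffunP => w; by rewrite !ffunE muln0.
rewrite exprS IH /Yv -pi_mul /dmul /= mulr1; congr (\pi_R [:: (_, _)]).
by apply/ffunP => w; rewrite !ffunE mulnS; case: (w == v).
Qed.

Lemma prod_single (I : Type) (s : seq I) (g : I -> M) :
  \prod_(i <- s) \pi_R [:: (1, g i)] = \pi_R [:: (1, [ffun w => \sum_(i <- s) g i w]%N)].
Proof.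
elim: s => [|i s IH].
  rewrite big_nil -pi_one; congr (\pi_R [:: (_, _)]); by apply/ffunP => w; rewrite !ffunE big_nil.
rewrite big_cons IH -pi_mul /dmul /= mulr1; congr (\pi_R [:: (_, _)]).
by apply/ffunP => w; rewrite !ffunE big_cons.
Qed.

Lemma pi_single (c : A) (m : M) : \pi_R [:: (c, m)] = Cc n gT c * mev (@Yv A n gT) m.
Proof.
rewrite /mev.
have -> : \prod_(v : 'I_n * gT) Yv A v ^+ m v = \prod_(v : 'I_n * gT) \pi_R [:: (1, mpow v (m v))].
  by apply: eq_bigr => v _; rewrite Yv_exp.
rewrite prod_single /Cc -pi_mul /dmul /= mulr1 mmul0; congr (\pi_R [:: (_, _)]).
apply/ffunP => w; rewrite ffunE (bigD1 w) //= ffunE eqxx mul1n big1 ?addn0 //.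
by move=> v /negbTE nv; rewrite ffunE eq_sym nv.
Qed.

Lemma pi_peval (q : P) : \pi_R q = peval (@Cc A n gT : {rmorphism A -> R}) (@Yv A n gT) q.
Proof.
elim: q => [|[c m] q IH]; first by rewrite /peval big_nil.
rewrite (_ : (c, m) :: q = dadd [:: (c, m)] q) // pi_add IH pi_single.
by rewrite /peval big_cons.
Qed.
End Pi2.

Local Open Scope quotient_scope.
Section Emb.
Variables (A : comNzRingType) (gT : finGroupType) (K : comNzRingType).
Variables (actA : gT -> {rmorphism A -> A}) (iota : {rmorphism A -> K}).
Definition embB (a : A) : BK gT K := [ffun s => iota (actA s a)].
Lemma embB_zmod : zmod_morphism embB.
Proof. by move=> x y; apply/ffunP => s; rewrite !ffunE !rmorphB. Qed.
Lemma embB_monoid : monoid_morphism embB.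
Proof. by split; [apply/ffunP => s; rewrite !ffunE !rmorph1 | move=> x y; apply/ffunP => s; rewrite !ffunE !rmorphM]. Qed.
End Emb.

HB.instance Definition _ (A : comNzRingType) (gT : finGroupType) (K : comNzRingType) (actA : gT -> {rmorphism A -> A}) (iota : {rmorphism A -> K}) :=
  GRing.isZmodMorphism.Build A (BK gT K) (@embB A gT K actA iota) (@embB_zmod A gT K actA iota).
HB.instance Definition _ (A : comNzRingType) (gT : finGroupType) (K : comNzRingType) (actA : gT -> {rmorphism A -> A}) (iota : {rmorphism A -> K}) :=
  GRing.isMonoidMorphism.Build A (BK gT K) (@embB A gT K actA iota) (@embB_monoid A gT K actA iota).

Lemma dact1 (A : comNzRingType) n (gT : finGroupType) (actA : gT -> {rmorphism A -> A})
  (hact : is_diff_action actA) (p : dpoly A n gT) : dact actA 1%g p = p.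
Proof.
rewrite /dact; elim: p => [|[c m] p IH] //=; rewrite IH hact.1; congr ((_, _) :: _).
by apply/ffunP => [[i s]]; rewrite ffunE /= invg1 mul1g.
Qed.

Lemma deval_embB (A : comNzRingType) n (gT : finGroupType) (K : comNzRingType)
  (actA : gT -> {rmorphism A -> A}) (hact : is_diff_action actA)
  (iota : {rmorphism A -> K}) (kappa : 'I_n * gT -> K) (p : dpoly A n gT) (s : gT) :
  deval (embB actA iota : {rmorphism A -> BK gT K}) (@actBK gT K)
     (fun i => [ffun s => kappa (i, s)]) p s = peval iota kappa (dact actA s p).
Proof.
rewrite /deval bk_sum /peval /dact big_map; apply: eq_bigr => t _ /=.
rewrite bk_mul bk_prod ffunE /mev; congr (_ * _).
rewrite [RHS](reindex_inj (h := fun v : 'I_n * gT => (v.1, (s * v.2)%g))).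
  apply: eq_bigr => v _ /=; rewrite bk_exp /actBK /= !ffunE /= mulKg.
  by case: v.
by move=> [i a] [j r] /= [-> /mulgI ->].
Qed.

Lemma field_ext (gT : finGroupType) (A : comNzRingType) (actA : gT -> {rmorphism A -> A})
  (hact : is_diff_action actA) (hA : pseudofield actA) n (I : dpoly A n gT -> Prop)
  (hI : dpoly_stable_ideal actA I) (f : dpoly A n gT) (hf : forall k, ~ I (dexp f k)) :
  exists (B : comNzRingType) (actB : gT -> {rmorphism B -> B})
         (phi : {rmorphism A -> B}) (b : 'I_n -> B),
    [/\ is_diff_action actB, pseudofield actB, contains actA actB phi,
        forall e, I e -> deval phi actB b e = 0 & deval phi actB b f != 0].
Proof.
case: hI => [[I0 [ID [IM Ideq]]] Ist].
pose R := RQ A n gT.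
pose J (r : R) := I (repr r).
have IJ : forall q, I q -> J (\pi_R q).
  by move=> q Iq; apply: (Ideq q _ (deq_sym (repr_deq q)) Iq).
have JI : forall q, J (\pi_R q) -> I q.
  by move=> q Jq; apply: (Ideq _ q (repr_deq q) Jq).
have hJ : ring_ideal J.
  split; first by apply: IJ.
  split.
  - move=> x y; elim/quotW: x => x; elim/quotW: y => y.
    by rewrite -pi_add => /JI hx /JI hy; apply: IJ; apply: ID.
  - move=> r x; elim/quotW: r => r; elim/quotW: x => x.
    by rewrite -pi_mul => /JI hx; apply: IJ; apply: IM.
pose F := \pi_R f.
have hF : forall k, ~ J (F ^+ k) by move=> k; rewrite -pi_exp => /JI; apply: hf.
have [Pr [hPr JPr PrF hPp]] := exists_prime hJ hF.
have hP1 : ~ Pr 1 by move=> h; apply: (PrF 0%N); rewrite expr0.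
have [K [rho hrho]] := prime_field hPr hP1 hPp.
pose iota := (rho \o (@Cc A n gT : {rmorphism A -> R}))%FUN : {rmorphism A -> K}.
pose kappa := (rho \o (@Yv A n gT))%FUN.
have key : forall q, rho (\pi_R q) = peval iota kappa q.
  by move=> q; rewrite pi_peval peval_comp.
have equiv : forall g a, embB actA iota (actA g a) = actBK K g (embB actA iota a).
  by move=> g a; apply/ffunP => s; rewrite /actBK /= !ffunE hact.2.
exists (BK gT K), (@actBK gT K), (embB actA iota : {rmorphism A -> BK gT K}),
  (fun i => [ffun s => kappa (i, s)]).
split.
- exact: actBK_action.
- exact: actBK_pseudofield.
- split => //.
  pose phiE := (embB actA iota : {rmorphism A -> BK gT K}).
  have ker : forall a, phiE a = 0 -> a = 0.
    pose Ker := fun a => phiE a = 0.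
    have hK : stable_ideal actA Ker.
      split.
      + split; first by rewrite /Ker rmorph0.
        split; first by move=> x y; rewrite /Ker rmorphD => -> ->; rewrite addr0.
        by move=> r x; rewrite /Ker rmorphM => ->; rewrite mulr0.
      + by move=> g x; rewrite /Ker /phiE /= equiv => /= ->; rewrite rmorph0.
    case: (hA.2 Ker hK) => // h1.
    by exfalso; move: (h1 1); rewrite /Ker rmorph1 => /eqP; rewrite oner_eq0.
  move=> a b h; apply/eqP; rewrite -subr_eq0; apply/eqP; apply: ker.
  by rewrite rmorphB /= h subrr.
- move=> e Ie; apply/ffunP => s; rewrite deval_embB //= -key ffunE.
  by apply/hrho; apply: JPr; apply: IJ; apply: Ist.
- apply/eqP => h; have := congr1 (fun x : BK gT K => x 1%g) h.
  rewrite /= deval_embB // dact1 // -key ffunE => /hrho.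
  by move=> h2; apply: (PrF 1%N); rewrite expr1.
Qed.

Local Close Scope quotient_scope.
Lemma prod_pair (R : comNzRingType) (I J : finType) (F : I * J -> R) :
  \prod_(v : I * J) F v = \prod_(i : I) \prod_(j : J) F (i, j).
Proof. by rewrite pair_big /=; apply: eq_bigr => [[i j]]. Qed.

Section Lift.
Variables (A : comNzRingType) (n m : nat) (gT : finGroupType).

Definition liftm (mo : monom n gT) : monom (n + m) gT :=
  [ffun v : 'I_(n + m) * gT => match split v.1 with inl i => mo (i, v.2) | inr _ => 0%N end].
Definition liftp (p : dpoly A n gT) : dpoly A (n + m) gT := [seq (t.1, liftm t.2) | t <- p].

Lemma eval_L (B : comNzRingType) (phi : A -> B) (actB : gT -> {rmorphism B -> B})
  (b : 'I_(n + m) -> B) (p : dpoly A n gT) :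
  deval phi actB b (liftp p) = deval phi actB (fun i => b (lshift m i)) p.
Proof.
rewrite /deval /liftp big_map; apply: eq_bigr => t _ /=; congr (_ * _).
rewrite !prod_pair.
rewrite big_split_ord /= [X in _ * X]big1 ?mulr1.
  apply: eq_bigr => i _; apply: eq_bigr => s _; rewrite ffunE /=.
  by rewrite (unsplitK (inl i)).
move=> j _; apply: big1 => s _; rewrite ffunE /=.
by rewrite (unsplitK (inr j)) expr0.
Qed.
End Lift.

Lemma peval_foldr (A B : comNzRingType) n (gT : finGroupType) (phi : {rmorphism A -> B})
  (x : 'I_n * gT -> B) (q0 : dpoly A n gT) (s : seq (dpoly A n gT)) :
  peval phi x (foldr (@dadd A n gT) q0 s) = \sum_(p <- s) peval phi x p + peval phi x q0.
Proof. by elim: s => [|p s IH]; rewrite ?big_nil ?add0r //= peval_cat IH big_cons addrA. Qed.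

Section ZT.
Variables (gT : finGroupType) (A : comNzRingType) (actA : gT -> {rmorphism A -> A}).
Local Notation m := #|gT|.
Definition tau (j : 'I_m) : gT := enum_val j.

Definition zvar n (j : 'I_m) : monom (n + m) gT := [ffun v => ((v == (rshift n j, 1%g)) : nat)].
Definition hz n (w : dpoly A n gT) (j : 'I_m) : dpoly A (n + m) gT :=
  dmul [:: (1, zvar n j)] (liftp m (dact actA (tau j) w)).
Definition hpoly n (w : dpoly A n gT) : dpoly A (n + m) gT :=
  foldr (@dadd A (n + m) gT) [:: (-1, monom0 (n + m) gT)] [seq hz w j | j <- enum 'I_m].

Lemma mev_var (B : comNzRingType) n (x : 'I_(n + m) * gT -> B) j :
  mev x (zvar n j) = x (rshift n j, 1%g).
Proof.
rewrite /mev (bigD1 (rshift n j, 1%g)) //= ffunE eqxx expr1 big1 ?mulr1 //.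
by move=> v /negbTE nv; rewrite ffunE nv expr0.
Qed.

Lemma hpoly_eval (B : comNzRingType) (phi : {rmorphism A -> B}) (actB : gT -> {rmorphism B -> B})
  (hB : is_diff_action actB) (hphi : forall g a, phi (actA g a) = actB g (phi a))
  n (b : 'I_(n + m) -> B) (w : dpoly A n gT) :
  deval phi actB b (hpoly w) =
  \sum_(j : 'I_m) b (rshift n j) * actB (tau j) (deval phi actB (fun i => b (lshift m i)) w) - 1.
Proof.
rewrite devalE /hpoly peval_foldr big_map big_enum /=; congr (_ + _).
  apply: eq_bigr => j _; rewrite /hz peval_mul; congr (_ * _).
    by rewrite /peval big_cons big_nil /= rmorph1 mul1r addr0 mev_var /= hB.1.
  by rewrite -devalE eval_L deval_dact.
by rewrite /peval big_cons big_nil /= rmorphN1 mev0 mulr1 addr0.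
Qed.

Lemma exists_c (B : comNzRingType) (actB : gT -> {rmorphism B -> B})
  (hB : is_diff_action actB) (pB : pseudofield actB) (x : B) :
  x != 0 -> exists c : 'I_m -> B, \sum_(j : 'I_m) c j * actB (tau j) x = 1.
Proof.
move=> nx.
pose Jw (y : B) := exists c : gT -> B, y = \sum_(s : gT) c s * actB s x.
have hJ : stable_ideal actB Jw.
  split.
  - split; first by exists (fun _ => 0); rewrite big1 // => s _; rewrite mul0r.
    split.
    + move=> y z [c1 ->] [c2 ->]; exists (fun s => c1 s + c2 s).
      by rewrite -big_split; apply: eq_bigr => s _; rewrite mulrDl.
    + move=> r y [c ->]; exists (fun s => r * c s).
      by rewrite big_distrr; apply: eq_bigr => s _ /=; rewrite mulrA.
  - move=> g y [c ->]; exists (fun s => actB g (c (g^-1 * s)%g)).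
    rewrite rmorph_sum (reindex_inj (h := fun s => (g^-1 * s)%g)) /=; last exact: mulgI.
    by apply: eq_bigr => s _ /=; rewrite rmorphM -hB.2 mulVKg.
case: (pB.2 Jw hJ) => [h0 | hall].
  exfalso; move/eqP: nx; apply; apply: h0; exists (fun s => (s == 1%g)%:R).
  rewrite (bigD1 1%g) //= eqxx mul1r hB.1 big1 ?addr0 // => s /negbTE ->.
  by rewrite mul0r.
have [c hc] := hall 1; exists (fun j => c (tau j)).
rewrite hc; symmetry.
rewrite (reindex (@enum_val gT predT)) /=; last first.
  by exists enum_rank => [s _ | j _]; [rewrite enum_valK | rewrite enum_rankK].
by [].
Qed.
End ZT.

Local Close Scope quotient_scope.
Definition St2 (gT : finGroupType) (A : comNzRingType) (actA : gT -> {rmorphism A -> A}) :=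
  forall (n : nat) (E : dpoly A n gT -> Prop),
          (exists (B : comNzRingType) (actB : gT -> {rmorphism B -> B})
                  (phi : {rmorphism A -> B}) (b : 'I_n -> B),
             [/\ is_diff_action actB, pseudofield actB, contains actA actB phi &
                 forall e, E e -> deval phi actB b e = 0]) ->
          exists a : 'I_n -> A, forall e, E e -> deval id actA a e = 0.

Definition St3 (gT : finGroupType) (A : comNzRingType) (actA : gT -> {rmorphism A -> A}) :=
       forall (n : nat) (E : dpoly A n gT -> Prop) (W : seq (dpoly A n gT)),
          (exists (B : comNzRingType) (actB : gT -> {rmorphism B -> B})
                  (phi : {rmorphism A -> B}) (b : 'I_n -> B),
             [/\ is_diff_action actB, pseudofield actB, contains actA actB phi,
                 forall e, E e -> deval phi actB b e = 0 &
                 forall w, w \in W -> deval phi actB b w != 0]) ->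
          exists a : 'I_n -> A,
            (forall e, E e -> deval id actA a e = 0) /\
            (forall w, w \in W -> deval id actA a w != 0).

Lemma deval_idE (A : comNzRingType) n (gT : finGroupType) (actA : gT -> {rmorphism A -> A})
  (a : 'I_n -> A) (p : dpoly A n gT) :
  deval id actA a p = deval (idfun : {rmorphism A -> A}) actA a p.
Proof. by []. Qed.

Lemma two_three (gT : finGroupType) (A : comNzRingType) (actA : gT -> {rmorphism A -> A})
  (hact : is_diff_action actA) : St2 actA -> St3 actA.
Proof.
move=> H2 n E W; move: (erefl (size W)); move: {2}(size W) => k.
elim: k n E W => [|k IH] n E [|w W] //= hk.
  move=> [B [actB [phi [b [hB pB cB hE hW]]]]].
  have [a ha] := H2 n E (ex_intro _ B (ex_intro _ actB (ex_intro _ phi (ex_intro _ b (And4 hB pB cB hE))))).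
  by exists a; split=> // w; rewrite in_nil.
move: hk => [hk] [B [actB [phi [b [hB pB cB hE hW]]]]].
have wb : deval phi actB b w != 0 by apply: hW; rewrite mem_head.
have [c hc] := exists_c hB pB wb.
pose m := #|gT|.
pose b' : 'I_(n + m) -> B := fun k => match split k with inl i => b i | inr j => c j end.
have hb' : (fun i => b' (lshift m i)) = b.
  by apply: functional_extensionality => i; rewrite /b' (unsplitK (inl i)).
have hbr : forall j, b' (rshift n j) = c j by move=> j; rewrite /b' (unsplitK (inr j)).
pose E' := fun e' => (exists e, E e /\ e' = @liftp A n m gT e) \/ e' = hpoly actA w.
pose W' := map (@liftp A n m gT) W.
have hphi : forall g a, phi (actA g a) = actB g (phi a) by apply: cB.2.
have [a' [ha'E ha'W]] : exists a' : 'I_(n + m) -> A,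
    (forall e, E' e -> deval id actA a' e = 0) /\
    (forall w, w \in W' -> deval id actA a' w != 0).
  apply: (IH _ _ W'); first by rewrite size_map.
  exists B, actB, phi, b'; split => //.
  - move=> e' [[e [Ee ->]] | ->]; first by rewrite eval_L hb'; apply: hE.
    rewrite hpoly_eval // hb'.
    by under eq_bigr => j _ do rewrite hbr; rewrite hc subrr.
  - move=> w' /mapP [w0 w0W ->]; rewrite eval_L hb'; apply: hW.
    by rewrite inE w0W orbT.
exists (fun i => a' (lshift m i)); split.
  by move=> e Ee; rewrite -eval_L; apply: ha'E; left; exists e.
move=> w0; rewrite inE => /orP [/eqP -> | w0W]; last first.
  by rewrite -eval_L; apply: ha'W; apply: map_f.
apply/eqP => h0.
have := ha'E (hpoly actA w) (or_intror erefl).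
rewrite deval_idE hpoly_eval //.
rewrite -deval_idE h0.
under eq_bigr => j _ do rewrite rmorph0 mulr0.
rewrite big1 // sub0r => /eqP; rewrite oppr_eq0 oner_eq0 //.
Qed.

Lemma reduced (A : comNzRingType) (hf : absolutely_flat A) (x : A) k : x ^+ k = 0 -> x = 0.
Proof.
have [y hy] := hf x.
elim: k => [|k IH]; first by rewrite expr0 => /eqP; rewrite oner_eq0.
case: k IH => [|k] IH; first by rewrite expr1.
move=> h; apply: IH.
have -> : x ^+ k.+1 = x ^+ k.+2 * y.
  by rewrite [in RHS]exprSr [in RHS]exprSr -!mulrA (mulrA x x y) -hy -exprSr.
by rewrite h mul0r.
Qed.

Lemma zero_ideal (gT : finGroupType) (A B : comNzRingType) (actA : gT -> {rmorphism A -> A})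
  (actB : gT -> {rmorphism B -> B}) (phi : {rmorphism A -> B}) n (b : 'I_n -> B) :
  is_diff_action actB -> (forall g a, phi (actA g a) = actB g (phi a)) ->
  dpoly_stable_ideal actA (fun p => deval phi actB b p = 0).
Proof.
move=> hB hphi; split; [split; [|split; [|split]] |].
- by rewrite devalE peval_nil.
- by move=> p q; rewrite !devalE peval_cat => -> ->; rewrite addr0.
- by move=> p q; rewrite !devalE peval_mul => ->; rewrite mulr0.
- by move=> p q h; rewrite !devalE (peval_deq _ _ h).
- by move=> g p; rewrite deval_dact // => ->; rewrite rmorph0.
Qed.

Lemma one_two (gT : finGroupType) (A : comNzRingType) (actA : gT -> {rmorphism A -> A}) :
  difference_closed actA -> St2 actA.
Proof.
move=> DC n E [B [actB [phi [b [hB pB cB hE]]]]].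
have hI := zero_ideal b hB cB.2.
have [_ h] := DC n _ hI (done_ A n gT).
apply: NNPP => nE.
have [k hk] : exists k, deval phi actB b (dexp (done_ A n gT) k) = 0.
  apply: h => a ha; apply: NNPP => na; apply: nE; exists a => e Ee.
  by apply: ha; apply: hE.
by move/eqP: hk; rewrite devalE peval_exp peval_one expr1n oner_eq0.
Qed.

Lemma three_one (gT : finGroupType) (A : comNzRingType) (actA : gT -> {rmorphism A -> A})
  (hact : is_diff_action actA) (hA : pseudofield actA) : St3 actA -> difference_closed actA.
Proof.
move=> H3 n I hI f; split.
- move=> [k Ik] a ha; have := ha _ Ik.
  rewrite deval_idE devalE peval_exp -devalE -deval_idE; apply: reduced; exact: hA.1.
- move=> h; apply: NNPP => nE.
  have hf : forall k, ~ I (dexp f k) by move=> k Ik; apply: nE; exists k.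
  have [B [actB [phi [b [hB pB cB hE hfb]]]]] := field_ext hact hA hI hf.
  have hW : forall w, w \in [:: f] -> deval phi actB b w != 0.
    by move=> w; rewrite inE => /eqP ->.
  have [a [ha hfa]] := H3 n I [:: f]
    (ex_intro _ B (ex_intro _ actB (ex_intro _ phi (ex_intro _ b
      (And5 hB pB cB hE hW))))).
  by move/eqP: (hfa f (mem_head _ _)); apply; apply: h.
Qed.

Theorem main_thm (gT : finGroupType) (A : comNzRingType)
  (actA : gT -> {rmorphism A -> A})
  (hact : is_diff_action actA) (hA : pseudofield actA) :
  (difference_closed actA <-> St2 actA) /\ (difference_closed actA <-> St3 actA).
Proof.
have h23 := two_three hact.
have h32 : St3 actA -> St2 actA.
  move=> H3 n E [B [actB [phi [b [hB pB cB hE]]]]].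
  have [a [ha _]] := H3 n E [::] (ex_intro _ B (ex_intro _ actB (ex_intro _ phi (ex_intro _ b
      (And5 hB pB cB hE (fun w (hw : w \in [::]) => False_ind _ (notF hw))))))).
  by exists a.
have h31 := three_one hact hA.
split; split.
- exact: one_two.
- by move=> H2; apply: h31; apply: h23.
- by move=> DC; apply: h23; apply: one_two.
- exact: h31.
Qed.

Theorem mainTheorem12 (gT : finGroupType) (A : comNzRingType)
  (actA : gT -> {rmorphism A -> A})
  (hact : is_diff_action actA) (hA : pseudofield actA) :
  (difference_closed actA <->
       (forall (n : nat) (E : dpoly A n gT -> Prop),
          (exists (B : comNzRingType) (actB : gT -> {rmorphism B -> B})
                  (phi : {rmorphism A -> B}) (b : 'I_n -> B),
             [/\ is_diff_action actB, pseudofield actB, contains actA actB phi &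
                 forall e, E e -> deval phi actB b e = 0]) ->
          exists a : 'I_n -> A, forall e, E e -> deval id actA a e = 0))
  /\ (difference_closed actA <->
       (forall (n : nat) (E : dpoly A n gT -> Prop) (W : seq (dpoly A n gT)),
          (exists (B : comNzRingType) (actB : gT -> {rmorphism B -> B})
                  (phi : {rmorphism A -> B}) (b : 'I_n -> B),
             [/\ is_diff_action actB, pseudofield actB, contains actA actB phi,
                 forall e, E e -> deval phi actB b e = 0 &
                 forall w, w \in W -> deval phi actB b w != 0]) ->
          exists a : 'I_n -> A,
            (forall e, E e -> deval id actA a e = 0) /\
            (forall w, w \in W -> deval id actA a w != 0))).
Proof. exact: main_thm hact hA. Qed.
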